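(* Let $p\in(0,1/2)$, $\gamma\in(0,1)$, $L\ge1$ an integer, and let $\mathcal{C}\subseteq\mathbb{F}_2^n$ be a linear code of dimension $k\le(1-\gamma)n$ such that for all $1\le\ell\le L$, $$Q_{\mathcal{C}}^{(\ge\ell)}\le\left(2^{-n(1-H(p))}\cdot2^k\right)^\ell\cdot2^{\gamma\ell^2n}.$$ Then for $b$ chosen uniformly from $\mathbb{F}_2^n$, with probability at least $1-4L^3\cdot2^{-\gamma n}$ over $b$, for all $1\le\ell\le L$, $$Q_{\mathcal{C}+\{0,b\}}^{(\ge\ell)}\le\left(2^{-n(1-H(p))}\cdot2^{k+1}\right)^\ell\cdot2^{\gamma\ell^2n}.$$
   Context: $\Delta$ is Hamming distance, $L_{\mathcal{C}}(x)=|\{c\in\mathcal{C}:\Delta(x,c)\le pn\}|$, $H(p)=-p\log_2p-(1-p)\log_2(1-p)$. $P_{\mathcal{C}}^{(\ell)}=2^{-n}|\{x\in\mathbb{F}_2^n:L_{\mathcal{C}}(x)=\ell\}|$ and $Q_{\mathcal{C}}^{(\ge\ell)}=\sum_{i\ge\ell}i\cdot P_{\mathcal{C}}^{(i)}$. $\mathcal{C}+\{0,b\}=\mathcal{C}\cup(\mathcal{C}+b)$. *)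

(* Defs.v *)
From Stdlib Require Import Reals.
From mathcomp Require Import all_boot all_algebra.

Set Implicit Arguments.
Unset Strict Implicit.
Unset Printing Implicit Defensive.

Notation word n := 'rV['F_2]_n.

Definition Rleb (x y : R) : bool := if Rle_dec x y then true else false.

Definition log2 (x : R) : R := Rdiv (ln x) (ln 2).
Definition Hent (p : R) : R :=
  Rminus (Ropp (Rmult p (log2 p))) (Rmult (Rminus 1 p) (log2 (Rminus 1 p))).

Definition hamming n (x y : word n) : nat :=
  #|[set i : 'I_n | x ord0 i != y ord0 i]|.

Definition listsize n (p : R) (C : {set word n}) (x : word n) : nat :=
  #|[set c in C | Rleb (INR (hamming x c)) (Rmult p (INR n))]|.

Definition Pl n (p : R) (C : {set word n}) (l : nat) : R :=
  Rdiv (INR #|[set x : word n | listsize p C x == l]|) (pow 2 n).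

(* Q_C^(>= l) = sum_{i >= l} i * P_C^(i); since L_C(x) <= #|C| <= 2^n,
   P_C^(i) = 0 for i > 2^n, so the sum may be truncated at 2^n. *)
Definition Qge n (p : R) (C : {set word n}) (l : nat) : R :=
  \big[Rplus/R0]_(l <= i < (expn 2 n).+1) Rmult (INR i) (Pl p C i).

Definition addpair n (C : {set word n}) (b : word n) : {set word n} :=
  C :|: [set (@GRing.add _ c b) | c in C].

Definition vset n (C : {vspace word n}) : {set word n} := [set x | x \in C].

Definition qbound (n : nat) (p gamma : R) (k l : nat) : R :=
  Rmult (pow (Rmult (Rpower 2 (Ropp (Rmult (INR n) (Rminus 1 (Hent p))))) (pow 2 k)) l)
        (Rpower 2 (Rmult gamma (Rmult (pow (INR l) 2) (INR n)))).

(* Main.v *)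
Require Import Defs.
From Stdlib Require Import Reals Lra.
From mathcomp Require Import all_boot all_algebra zify.

Definition gg (l t : nat) : nat := if (l <= t)%N then t else 0%N.
Definition hh (l A B : nat) : nat :=
  if [&& (0 < A)%N, (0 < B)%N & (l <= A + B)%N] then (A + B)%N else 0%N.

Lemma P1 l A B : (gg l (A+B) <= gg l A + gg l B + hh l A B)%N.
Proof. rewrite /gg /hh; do ! case: ifP; lia. Qed.

Lemma P3 l x y : (x <= y -> gg l x <= gg l y)%N.
Proof. rewrite /gg; do ! case: ifP; lia. Qed.

Lemma P4 A B : gg 1 (A+B) = (gg 1 A + gg 1 B)%N.
Proof. rewrite /gg; do ! case: ifP; lia. Qed.

Lemma term_le_sum (s : seq nat) (F : nat -> nat) i :
  i \in s -> (F i <= \sum_(j <- s) F j)%N.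
Proof.
elim: s => //= a s IH; rewrite in_cons big_cons => /orP[/eqP->|/IH]; lia.
Qed.

Lemma P2 l A B : (2 <= l)%N ->
  (hh l A B <= \sum_(1 <= i < l) (gg i A * (l - i <= B) + gg i B * (l - i <= A)))%N.
Proof.
move=> l2; rewrite /hh; case: ifP => [/and3P[A0 B0 AB]|] //.
rewrite big_split /=.
have h1 : (A <= \sum_(1 <= i < l) gg i A * (l - i <= B))%N.
  apply: (leq_trans _ (term_le_sum _ (fun i => gg i A * (l - i <= B))%N (minn A l.-1) _)).
    have -> : (l - minn A l.-1 <= B)%N = true by apply/idP; lia.
    rewrite muln1 /gg; case: ifP; lia.
  rewrite mem_index_iota; lia.
have h2 : (B <= \sum_(1 <= i < l) gg i B * (l - i <= A))%N.
  apply: (leq_trans _ (term_le_sum _ (fun i => gg i B * (l - i <= A))%N (minn B l.-1) _)).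
    have -> : (l - minn B l.-1 <= A)%N = true by apply/idP; lia.
    rewrite muln1 /gg; case: ifP; lia.
  rewrite mem_index_iota; lia.
lia.
Qed.

Section W.
Variable n : nat.
Local Notation W := 'rV['F_2]_n.

Lemma reidx (x : W) (G : W -> nat) : (\sum_b G (x - b)%R = \sum_y G y)%N.
Proof.
symmetry; rewrite (reindex_inj (h := fun b => (x - b)%R)) //.
by move=> u v /GRing.addrI /GRing.oppr_inj.
Qed.

Lemma Kl (F G : W -> nat) :
  (\sum_b \sum_x F x * G (x - b)%R = (\sum_x F x) * (\sum_y G y))%N.
Proof.
rewrite exchange_big big_distrl /=; apply: eq_bigr => x _.
by rewrite -big_distrr /= reidx.
Qed.

Lemma cardW : #|{: W}| = (2 ^ n)%N.
Proof. by rewrite card_mx card_Fp // mul1n. Qed.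

Lemma ham_sub (x b c : W) : hamming x (c + b)%R = hamming (x - b)%R c.
Proof.
rewrite /hamming; apply: eq_card => i; rewrite !inE !mxE.
by rewrite GRing.subr_eq.
Qed.

Lemma listsize_add p (D : {set W}) b x :
  (listsize p (addpair D b) x <= listsize p D x + listsize p D (x - b)%R)%N.
Proof.
rewrite /listsize /addpair.
pose P := fun (x : W) c => Rleb (INR (hamming x c)) (Rmult p (INR n)).
rewrite -/(P x _) -/(P (x - b)%R _).
have -> : [set c in D :|: [set (c + b)%R | c in D] | P x c] =
  [set c in D | P x c] :|: [set c in [set (c + b)%R | c in D] | P x c].
  by apply/setP => c; rewrite !inE andb_orl.
apply: leq_trans (leq_card_setU _ _) _; rewrite leq_add2l.
have -> : [set c in [set (c + b)%R | c in D] | P x c] =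
  [set (c + b)%R | c in [set c in D | P (x - b)%R c]].
  apply/setP => c; rewrite !inE; apply/andP/imsetP.
    case=> /imsetP[c' c'D ->] Pc; exists c' => //; rewrite inE c'D /=.
    by rewrite /P -ham_sub.
  case=> c' /[!inE] /andP[c'D Pc] ->; split; first by apply/imsetP; exists c'.
  by rewrite /P ham_sub.
by rewrite card_imset //; apply: GRing.addIr.
Qed.

Lemma listsize_le p (D : {set W}) x : (listsize p D x <= 2 ^ n)%N.
Proof. by rewrite -cardW; apply: max_card. Qed.

End W.

Lemma reidx2 n (b : 'rV['F_2]_n) (G : 'rV['F_2]_n -> nat) :
  (\sum_x G (x - b)%R = \sum_y G y)%N.
Proof.
symmetry; rewrite (reindex_inj (h := fun x => (x - b)%R)) //.
by move=> u v /GRing.addIr.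
Qed.

Lemma cnt_le j t : (1 <= j)%N -> ((j <= t)%N : nat) <= gg j t.
Proof. rewrite /gg; case: ifP => //=; lia. Qed.

Lemma Kl2 n (F G F' G' : 'rV['F_2]_n -> nat) :
  (\sum_b \sum_x (F x * G (x - b)%R + F' (x - b)%R * G' x) =
   (\sum_x F x) * (\sum_y G y) + (\sum_x G' x) * (\sum_y F' y))%N.
Proof.
under eq_bigr do rewrite big_split.
rewrite big_split /= Kl; congr addn.
under eq_bigr do under eq_bigr do rewrite mulnC.
exact: Kl.
Qed.

Set Implicit Arguments.
Local Open Scope R_scope.

Definition SS n p (D : {set word n}) l := (\sum_(x : word n) gg l (listsize p D x))%N.

Lemma INR_expn2 n : INR (2 ^ n)%N = 2 ^ n.
Proof. elim: n => [|n IH] //=; rewrite expnS mult_INR IH //. Qed.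

Lemma sum_single (m N t : nat) : (t <= N)%N ->
  (\sum_(m <= i < N.+1) i * (if t == i then 1 else 0))%N = gg m t.
Proof.
move=> tN; rewrite /gg; case: ifP => mt.
  rewrite (bigD1_seq t) /=; last by apply: iota_uniq.
    rewrite eqxx muln1 big1 ?addn0 // => i /negbTE; rewrite eq_sym => ->; by rewrite muln0.
  by rewrite mem_index_iota; lia.
rewrite big_seq big1 // => i; rewrite mem_index_iota => /andP[mi _].
have -> : (t == i) = false by apply/negbTE; apply/eqP; lia.
by rewrite muln0.
Qed.

Lemma Qge_eq n p (D : {set word n}) l :
  Qge p D l = Rdiv (INR (SS p D l)) (2 ^ n).
Proof.
rewrite /Qge /Pl.
have hD : 2 ^ n <> R0 by apply: pow_nonzero; lra.
rewrite (eq_bigr (fun i => (fun m => Rdiv (INR m) (2 ^ n)) (i * #|[set x : word n | listsize p D x == i]|)%N)); last first.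
  by move=> i _; rewrite mult_INR; field.
rewrite -(big_morph (fun m => Rdiv (INR m) (2 ^ n)) (id1 := R0) (op1 := Rplus) (id2 := 0%N) (op2 := addn) _ _ (index_iota l (2^n).+1) xpredT (fun i => i * #|[set x : word n | listsize p D x == i]|)%N); last first.
- by rewrite /= /Rdiv Rmult_0_l.
- by move=> a b; rewrite plus_INR /Rdiv Rmult_plus_distr_r.
congr (Rdiv (INR _) _).
rewrite /SS.
under eq_bigr => i _ do rewrite -sum1_card big_mkcond /= big_distrr /=.
rewrite exchange_big /=; apply: eq_bigr => x _.
rewrite -(@sum_single l _ _ (listsize_le _ p D x)); apply: eq_bigr => i _.
by rewrite inE.
Qed.

Lemma RlebP x y : reflect (x <= y) (Rleb x y).
Proof. rewrite /Rleb; case: Rle_dec => h; constructor => //. Qed.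

Lemma qb_pos n p g k l : 0 < qbound n p g k l.
Proof.
rewrite /qbound; apply: Rmult_lt_0_compat; last by rewrite /Rpower; apply: exp_pos.
apply: pow_lt; apply: Rmult_lt_0_compat; first by rewrite /Rpower; apply: exp_pos.
apply: pow_lt; lra.
Qed.

Lemma qb_S n p g k l : qbound n p g k.+1 l = 2 ^ l * qbound n p g k l.
Proof.
rewrite /qbound; set X := Rpower 2 (Ropp _).
have -> : X * 2 ^ k.+1 = 2 * (X * 2 ^ k) by rewrite [pow 2 k.+1]/=; ring.
rewrite Rpow_mult_distr; ring.
Qed.

Lemma qb_mul n p g k i j : 0 <= g -> (1 <= i)%N -> (1 <= j)%N ->
  qbound n p g k i * qbound n p g k j <=
  qbound n p g k (i + j) * Rpower 2 (- (g * INR n)).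
Proof.
move=> g0 i1 j1; rewrite /qbound.
set a := Rmult (Rpower 2 _) (pow 2 k).
rewrite pow_add.
have hE : Rpower 2 (g * (INR i ^ 2 * INR n)) * Rpower 2 (g * (INR j ^ 2 * INR n))
   <= Rpower 2 (g * (INR (i + j) ^ 2 * INR n)) * Rpower 2 (- (g * INR n)).
  rewrite -!Rpower_plus; apply: Rle_Rpower; first lra.
  have hi : 1 <= INR i by apply: (le_INR 1); apply/leP.
  have hj : 1 <= INR j by apply: (le_INR 1); apply/leP.
  have hn : 0 <= INR n by apply: pos_INR.
  have hgn : 0 <= g * INR n by apply: Rmult_le_pos.
  have hij : 0 <= INR i * INR j - 1 by nra.
  have : 0 <= g * INR n * (INR i * INR j - 1) by apply: Rmult_le_pos.
  rewrite plus_INR; nra.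
have ha : 0 <= a ^ i * a ^ j.
  apply: Rmult_le_pos; apply: pow_le; rewrite /a; left;
  apply: Rmult_lt_0_compat; try (rewrite /Rpower; apply: exp_pos); apply: pow_lt; lra.
have := Rmult_le_compat_l _ _ _ ha hE; lra.
Qed.

Lemma sum_INR_le (I : eqType) (s : seq I) (P : pred I) (f : I -> nat) c :
  0 <= c -> (forall i, i \in s -> P i -> INR (f i) <= c) ->
  INR (\sum_(i <- s | P i) f i)%N <= INR (size s) * c.
Proof.
move=> c0; elim: s => [|a s IH] H; first by rewrite big_nil /=; lra.
rewrite big_cons -/(size (a :: s)) [size _]/= S_INR.
have IH' := IH (fun i hi => H i (introT orP (or_intror hi))).
case: ifP => Pa; last by nra.
rewrite plus_INR; have := H a (mem_head a s) Pa; nra.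
Qed.

Lemma INR_card_le (T : finType) (A : {set T}) (f : T -> nat) c :
  (forall b, b \in A -> c <= INR (f b)) ->
  INR #|A| * c <= INR (\sum_(b in A) f b)%N.
Proof.
move=> H; rewrite cardE -big_enum /=.
have : forall b, b \in enum A -> c <= INR (f b) by move=> b; rewrite mem_enum; apply: H.
elim: (enum A) => [|a s IH] H'; first by rewrite big_nil /=; lra.
rewrite big_cons -/(size (a :: s)) [size _]/= S_INR plus_INR.
have := IH (fun i hi => H' i (introT orP (or_intror hi))); have := H' a (mem_head a s); lra.
Qed.

Theorem lemma4 (n k L : nat) (p gamma : R) (C : {vspace 'rV['F_2]_n}) :
  0 < p < 1 / 2 ->
  0 < gamma < 1 ->
  (1 <= L)%N ->
  \dim C = k ->
  INR k <= (1 - gamma) * INR n ->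
  (forall l : nat, (1 <= l <= L)%N ->
     Qge p (vset C) l <= qbound n p gamma k l) ->
  INR #|[set b : 'rV['F_2]_n |
           [forall l : 'I_L.+1, (1 <= l)%N ==>
              Rleb (Qge p (addpair (vset C) b) l) (qbound n p gamma k.+1 l)]]|
     / 2 ^ n
  >= 1 - 4 * INR L ^ 3 * Rpower 2 (- (gamma * INR n)).
Proof.
move=> [p0 p1] [g0 g1] L1 dimC kn Hyp.
set V := vset C.
pose N := (2 ^ n)%N.
have NR : INR N = 2 ^ n by apply: INR_expn2.
have Npos : 0 < INR N by rewrite NR; apply: pow_lt; lra.
have NR0 : INR N <> 0 by lra.
set eps := Rpower 2 (- (gamma * INR n)).
have eps0 : 0 <= eps by left; rewrite /eps /Rpower; apply: exp_pos.
pose qb := qbound n p gamma.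
have HS : forall i, (1 <= i <= L)%N -> INR (SS p V i) <= INR N * qb k i.
  move=> i hi; have := Hyp i hi; rewrite Qge_eq -NR => h.
  have -> : INR (SS p V i) = INR N * (INR (SS p V i) / INR N) by field; exact: NR0.
  apply: Rmult_le_compat_l; [lra | exact: h].
pose cross l b := (\sum_x hh l (listsize p V x) (listsize p V (x - b)%R))%N.
have GS0 : forall b l, (SS p (addpair V b) l <=
   \sum_x gg l (listsize p V x + listsize p V (x - b)%R))%N.
  by move=> b l; apply: leq_sum => x _; apply: P3; apply: listsize_add.
have GS : forall b l, (SS p (addpair V b) l <= SS p V l + SS p V l + cross l b)%N.
  move=> b l; apply: leq_trans (GS0 b l) _.
  apply: (@leq_trans (\sum_x (gg l (listsize p V x) + gg l (listsize p V (x - b)%R)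
     + hh l (listsize p V x) (listsize p V (x - b)%R)))%N).
    by apply: leq_sum => x _; apply: P1.
  by rewrite !big_split /= (reidx2 _ b (fun y => gg l (listsize p V y))).
have GS1 : forall b, (SS p (addpair V b) 1 <= SS p V 1 + SS p V 1)%N.
  move=> b; apply: leq_trans (GS0 b 1%N) _.
  under eq_bigr do rewrite P4.
  by rewrite big_split /= (reidx2 _ b (fun y => gg 1 (listsize p V y))).
have red : forall b l, INR (SS p (addpair V b) l) <= INR N * qb k.+1 l ->
    Qge p (addpair V b) l <= qb k.+1 l.
  move=> b l h; rewrite Qge_eq -NR.
  apply: (Rmult_le_reg_l (INR N)) => //.
  have -> : INR N * (INR (SS p (addpair V b) l) / INR N) = INR (SS p (addpair V b) l)
    by field; exact: NR0.
  exact: h.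
have GL1 : forall b, Qge p (addpair V b) 1%N <= qb k.+1 1%N.
  move=> b; apply: red; rewrite /qb qb_S -/qb.
  have := le_INR _ _ (elimT leP (GS1 b)); rewrite plus_INR.
  have := HS 1%N (introT andP (conj (leqnn 1%N) L1)); rewrite [pow 2 1]/= => h1; lra.
have GL2 : forall b l, (2 <= l <= L)%N ->
    INR (cross l b) <= INR N * (qb k.+1 l / 2) ->
    Qge p (addpair V b) l <= qb k.+1 l.
  move=> b l /andP[l2 lL] H; apply: red.
  have Q0 : 0 < qb k l := qb_pos n p gamma k l.
  have := HS l (introT andP (conj (ltnW l2) lL)).
  rewrite /qb qb_S -/qb in H *.
  have := le_INR _ _ (elimT leP (GS b l)); rewrite !plus_INR.
  have P4 : 4 <= 2 ^ l.
    case: l l2 {lL H Q0} => [|[|l']] // _.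
    rewrite [pow 2 l'.+2]/=; have := pow_R1_Rle 2 l'; lra.
  have : 0 <= INR N * qb k l * (2 ^ l - 4).
    apply: Rmult_le_pos; last lra; apply: Rmult_le_pos; lra.
  nra.
pose bad l := [set b | ~~ Rleb (INR (cross l b)) (INR N * (qb k.+1 l / 2))].
have stepB : forall l, (2 <= l)%N ->
    (\sum_b cross l b <= 2 * \sum_(1 <= i < l) SS p V i * SS p V (l - i))%N.
  move=> l l2.
  apply: (@leq_trans (\sum_b \sum_x \sum_(1 <= i < l)
     (gg i (listsize p V x) * (l - i <= listsize p V (x - b)%R)
      + gg i (listsize p V (x - b)%R) * (l - i <= listsize p V x)))%N).
    by apply: leq_sum => b _; apply: leq_sum => x _; apply: P2.
  under eq_bigr do rewrite exchange_big.
  rewrite exchange_big /= big_distrr /=.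
  rewrite big_seq_cond [X in (_ <= X)%N]big_seq_cond.
  apply: leq_sum => i /andP[]; rewrite mem_index_iota => /andP[i1 il] _.
  rewrite (@Kl2 n (fun x => gg i (listsize p V x))
               (fun y => nat_of_bool (l - i <= listsize p V y)%N)
               (fun y => gg i (listsize p V y))
               (fun y => nat_of_bool (l - i <= listsize p V y)%N)).
  have hc : (\sum_y nat_of_bool (l - i <= listsize p V y)%N <= SS p V (l - i))%N.
    by apply: leq_sum => y _; apply: cnt_le; lia.
  have := leq_mul (leqnn (SS p V i)) hc.
  rewrite /SS -/(SS p V i) -/(SS p V (l - i)); lia.
have ML : forall l, (2 <= l <= L)%N -> INR #|bad l| <= 2 * INR L * INR N * eps.
  move=> l /andP[l2 lL].
  have Q0 : 0 < qb k l := qb_pos n p gamma k l.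
  have hA : INR #|bad l| * (INR N * (qb k.+1 l / 2)) <= INR (\sum_b cross l b)%N.
    apply: Rle_trans (INR_card_le (cross l) _) _.
      move=> b; rewrite inE; case: RlebP => // h _; lra.
    apply: le_INR; apply/leP; rewrite [X in (X <= _)%N]big_mkcond.
    by apply: leq_sum => b _; case: ifP.
  have hB := le_INR _ _ (elimT leP (stepB l l2)).
  have c0 : 0 <= INR N * INR N * qb k l * eps.
    apply: Rmult_le_pos; last exact: eps0.
    apply: Rmult_le_pos; [nra | lra].
  have hC : INR (2 * \sum_(1 <= i < l) SS p V i * SS p V (l - i))%N
            <= 2 * (INR L * (INR N * INR N * qb k l * eps)).
    rewrite mult_INR [INR 2]/=; apply: Rmult_le_compat_l; first lra.
    apply: Rle_trans (@sum_INR_le _ _ xpredT _ _ _ _) _.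
    - exact: c0.
    - move=> i; rewrite mem_index_iota => /andP[i1 il] _; rewrite mult_INR.
      have h1 := HS i (introT andP (conj i1 (leq_trans (ltnW il) lL))).
      have li : (1 <= l - i)%N by lia.
      have h2 : INR (SS p V (l - i)%N) <= INR N * qb k (l - i)%N.
        apply: HS; apply/andP; split; lia.
      apply: Rle_trans (Rmult_le_compat _ _ _ _ (pos_INR _) (pos_INR _) h1 h2) _.
      have := @qb_mul n p gamma k i (l - i)%N (Rlt_le _ _ g0) i1 li.
      rewrite subnKC; last by apply: ltnW.
      rewrite -/qb -/eps => h.
      have NN : 0 <= INR N * INR N by nra.
      nra.
    - apply: Rmult_le_compat_r; first exact: c0.
      rewrite size_iota; apply: le_INR; apply/leP; lia.
  apply: (Rmult_le_reg_r (INR N * qb k l)); first by apply: Rmult_lt_0_compat.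
  have hb : 0 <= INR #|bad l| := pos_INR _.
  have P2l : 2 <= 2 ^ l.
    clear -l2; case: l l2 => [|[|l']] // _.
    rewrite [pow 2 l'.+2]/=; have := pow_R1_Rle 2 l'; lra.
  have : INR #|bad l| * (INR N * qb k l) <= INR #|bad l| * (INR N * (qb k.+1 l / 2)).
    apply: Rmult_le_compat_l => //; rewrite /qb qb_S -/qb.
    apply: Rmult_le_compat_l; first lra; nra.
  nra.
set G := [set b | _].
pose badAll := [set b | [exists l : 'I_L.+1, (2 <= l)%N && (b \in bad l)]].
have sub : ~: G \subset badAll.
  apply/subsetP => b; rewrite !inE => /forallPn [l]; rewrite negb_imply => /andP[l1 nb].
  apply/existsP; exists l.
  have lL : (l <= L)%N by have := ltn_ord l.
  case: (boolP (2 <= l)%N) => l2 /=.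
    rewrite inE; apply: contra nb => h; apply/RlebP; apply: GL2.
      by apply/andP; split.
    exact/RlebP.
  have e : (l : nat) = 1%N by lia.
  have := GL1 b; move/RlebP; rewrite -e.
  by rewrite (negbTE nb).
have cardG : (2 ^ n <= #|G| + #|badAll|)%N.
  have := cardsC G; rewrite cardW => <-; rewrite leq_add2l.
  exact: subset_leq_card.
have hbadAll : (#|badAll| <= \sum_(2 <= l < L.+1) #|bad l|)%N.
  rewrite -sum1_card big_mkcond /=.
  under [X in (_ <= X)%N]eq_bigr => l _ do rewrite -sum1_card big_mkcond /=.
  rewrite [X in (_ <= X)%N]exchange_big /=; apply: leq_sum => b _.
  case: ifP => //; rewrite inE => /existsP [l /andP[l2 hb]].
  apply: (leq_trans _ (term_le_sum _ (fun l => if b \in bad l then 1 else 0)%N l _)).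
    by rewrite hb.
  rewrite mem_index_iota; have := ltn_ord l; lia.
have c1 : 0 <= 2 * INR L * INR N * eps.
  have hL := pos_INR L; apply: Rmult_le_pos; [nra | exact: eps0].
have hR : INR (\sum_(2 <= l < L.+1) #|bad l|)%N <= INR L * (2 * INR L * INR N * eps).
  apply: Rle_trans (@sum_INR_le _ _ xpredT _ _ _ _) _.
  - exact: c1.
  - move=> l; rewrite mem_index_iota => /andP[l2 lL] _; apply: ML; apply/andP; split; lia.
  - apply: Rmult_le_compat_r; first exact: c1.
    rewrite size_iota; apply: le_INR; apply/leP; lia.
have hG := le_INR _ _ (elimT leP cardG); rewrite plus_INR -/N in hG.
have hB := le_INR _ _ (elimT leP hbadAll).
have L1R : 1 <= INR L by apply: (le_INR 1); apply/leP.
apply: Rle_ge; rewrite -NR.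
apply: (Rmult_le_reg_r (INR N)) => //.
have -> : INR #|G| / INR N * INR N = INR #|G| by field; exact: NR0.
have : 0 <= INR L * INR L * INR N * eps * (4 * INR L - 2).
  apply: Rmult_le_pos; last lra.
  apply: Rmult_le_pos => //; apply: Rmult_le_pos; last lra; nra.
rewrite [pow (INR L) 3]/=.
nra.
Qed.
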